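(* Let $h(t),\beta(t)$ be arbitrary smooth functions on an interval $I$ and $a,b,c,s$ real constants. Let $\Lambda(t)$ be an antiderivative of $\beta(t)-ah(t)$, fix $t_0\in I$, and set $$q(t)=e^{2\Lambda(t)}\Big((2a-b)s\int_{t_0}^te^{-2\Lambda(\tau)}\,d\tau+c\Big),$$ so that $q'=2(\beta-ah)q+(2a-b)s$. Define $$u=asyz+(\beta-ah)x,\quad v=-\beta y,\quad w=ahz,$$ $$H^1=ayz\,q(t)+\Big(\frac b2-a\Big)x,\quad H^2=-\frac b2y,\quad H^3=az,$$ $$p=-\rho\Big((\beta'-ah'+(\beta-ah)^2)\frac{x^2}{2}+(\beta^2-\beta')\frac{y^2}{2}+(ah'+a^2h^2)\frac{z^2}{2}-\mu_0a^2q^2\frac{y^2z^2}{2}-\mu_0aq\Big(\frac b2-a\Big)xyz\Big)+\theta(t),$$ with $\theta$ arbitrary. Then $\mathbf v=(u,v,w)^t$, $\mathbf H=(H^1,H^2,H^3)^t$ and $p$ solve the MHD system on $I\times\mathbb R^3$.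
   Context: Throughout, $\nu,\eta,\mu_0,\rho$ are positive constants. The MHD system for $\mathbf v=(u,v,w)^t$, $\mathbf H=(H^1,H^2,H^3)^t$, $p$, functions of $(t,x,y,z)$, is $$\nabla\cdot\mathbf v=0,\quad \mathbf v_t+(\mathbf v\cdot\nabla)\mathbf v-\mu_0(\mathbf H\times\operatorname{rot}\mathbf H)+\tfrac1\rho\nabla p=\nu\Delta\mathbf v,\quad \nabla\cdot\mathbf H=0,\quad \mathbf H_t=\operatorname{rot}(\mathbf v\times\mathbf H)+\eta\Delta\mathbf H,$$ with $\operatorname{rot}$ the curl and $\Delta$ the componentwise Laplacian in $(x,y,z)$. A prime denotes $d/dt$. *)

(* Defs.v *)
From Stdlib Require Import Reals Lra Classical ClassicalEpsilon.
Open Scope R_scope.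

Definition is_open_interval (I : R -> Prop) : Prop :=
  (exists t, I t) /\
  (forall x y z, I x -> I z -> x <= y <= z -> I y) /\
  (forall t, I t -> exists e, 0 < e /\ forall s, Rabs (s - t) < e -> I s).

(** Classical derivative: the derivative of g at x if it exists, 0 otherwise. *)
Definition Deriv (g : R -> R) (x : R) : R :=
  match excluded_middle_informative (exists l, derivable_pt_lim g x l) with
  | left H => proj1_sig (constructive_indefinite_description _ H)
  | right _ => 0
  end.

Definition ex_deriv (g : R -> R) (x : R) : Prop := exists l, derivable_pt_lim g x l.

Definition smooth_on (I : R -> Prop) (f : R -> R) : Prop :=
  exists D : nat -> R -> R,
    (forall t, D O t = f t) /\
    (forall n t, I t -> derivable_pt_lim (D n) t (D (S n) t)).

(** Riemann integral int_a^b f (oriented), 0 if f is not Riemann integrable. *)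
Definition integral (f : R -> R) (a b : R) : R :=
  match excluded_middle_informative (exists pr : Riemann_integrable f a b, True) with
  | left H => RiemannInt (proj1_sig (constructive_indefinite_description _ H))
  | right _ => 0
  end.

(** Fields: functions of (t, x, y, z). *)
Definition Fld := R -> R -> R -> R -> R.

Definition pd_t (f : Fld) : Fld := fun t x y z => Deriv (fun s => f s x y z) t.
Definition pd_x (f : Fld) : Fld := fun t x y z => Deriv (fun s => f t s y z) x.
Definition pd_y (f : Fld) : Fld := fun t x y z => Deriv (fun s => f t x s z) y.
Definition pd_z (f : Fld) : Fld := fun t x y z => Deriv (fun s => f t x y s) z.

Definition ex_pd_t (f : Fld) t x y z := ex_deriv (fun s => f s x y z) t.
Definition ex_pd_x (f : Fld) t x y z := ex_deriv (fun s => f t s y z) x.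
Definition ex_pd_y (f : Fld) t x y z := ex_deriv (fun s => f t x s z) y.
Definition ex_pd_z (f : Fld) t x y z := ex_deriv (fun s => f t x y s) z.

Definition lap (f : Fld) : Fld := fun t x y z =>
  pd_x (pd_x f) t x y z + pd_y (pd_y f) t x y z + pd_z (pd_z f) t x y z.

Definition reg_field (f : Fld) t x y z : Prop :=
  ex_pd_t f t x y z /\ ex_pd_x f t x y z /\ ex_pd_y f t x y z /\ ex_pd_z f t x y z /\
  ex_pd_x (pd_x f) t x y z /\ ex_pd_y (pd_y f) t x y z /\ ex_pd_z (pd_z f) t x y z.

Definition MHD_solution (I : R -> Prop) (nu eta mu0 rho : R)
  (u v w H1 H2 H3 p : Fld) : Prop :=
  forall t x y z, I t ->
  let Ux := pd_x u t x y z in let Uy := pd_y u t x y z in let Uz := pd_z u t x y z in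
  let Vx := pd_x v t x y z in let Vy := pd_y v t x y z in let Vz := pd_z v t x y z in
  let Wx := pd_x w t x y z in let Wy := pd_y w t x y z in let Wz := pd_z w t x y z in
  let R1 := pd_y H3 t x y z - pd_z H2 t x y z in
  let R2 := pd_z H1 t x y z - pd_x H3 t x y z in
  let R3 := pd_x H2 t x y z - pd_y H1 t x y z in
  let h1 := H1 t x y z in let h2 := H2 t x y z in let h3 := H3 t x y z in
  let uu := u t x y z in let vv := v t x y z in let ww := w t x y z in
  let E1 : Fld := fun t x y z => v t x y z * H3 t x y z - w t x y z * H2 t x y z in
  let E2 : Fld := fun t x y z => w t x y z * H1 t x y z - u t x y z * H3 t x y z in
  let E3 : Fld := fun t x y z => u t x y z * H2 t x y z - v t x y z * H1 t x y z in
  (reg_field u t x y z /\ reg_field v t x y z /\ reg_field w t x y z /\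
   reg_field H1 t x y z /\ reg_field H2 t x y z /\ reg_field H3 t x y z /\
   ex_pd_x p t x y z /\ ex_pd_y p t x y z /\ ex_pd_z p t x y z) /\
  Ux + Vy + Wz = 0 /\
  pd_t u t x y z + (uu * Ux + vv * Uy + ww * Uz) - mu0 * (h2 * R3 - h3 * R2)
    + / rho * pd_x p t x y z = nu * lap u t x y z /\
  pd_t v t x y z + (uu * Vx + vv * Vy + ww * Vz) - mu0 * (h3 * R1 - h1 * R3)
    + / rho * pd_y p t x y z = nu * lap v t x y z /\
  pd_t w t x y z + (uu * Wx + vv * Wy + ww * Wz) - mu0 * (h1 * R2 - h2 * R1)
    + / rho * pd_z p t x y z = nu * lap w t x y z /\
  pd_x H1 t x y z + pd_y H2 t x y z + pd_z H3 t x y z = 0 /\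
  pd_t H1 t x y z = (pd_y E3 t x y z - pd_z E2 t x y z) + eta * lap H1 t x y z /\
  pd_t H2 t x y z = (pd_z E1 t x y z - pd_x E3 t x y z) + eta * lap H2 t x y z /\
  pd_t H3 t x y z = (pd_x E2 t x y z - pd_y E1 t x y z) + eta * lap H3 t x y z.

(* Main.v *)
Require Import Defs.
From Stdlib Require Import Reals Lra FunctionalExtensionality Classical ClassicalEpsilon.
Open Scope R_scope.

Lemma Deriv_eq g x l : derivable_pt_lim g x l -> Deriv g x = l.
Proof.
  intro H. unfold Deriv. destruct excluded_middle_informative as [e|n].
  - destruct constructive_indefinite_description as [l' Hl]. simpl.
    exact (uniqueness_limite _ _ _ _ Hl H).
  - exfalso; apply n; eauto.
Qed.

Lemma integral_eq f a b (pr : Riemann_integrable f a b) : integral f a b = RiemannInt pr.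
Proof.
  unfold integral. destruct excluded_middle_informative as [e|n].
  - destruct constructive_indefinite_description as [pr' Htriv]. simpl. apply RiemannInt_P5.
  - exfalso; apply n; exists pr; exact Logic.I.
Qed.

Lemma local_deriv g1 g2 t d l : 0 < d -> (forall s, Rabs (s - t) < d -> g1 s = g2 s) ->
  derivable_pt_lim g1 t l -> derivable_pt_lim g2 t l.
Proof.
  intros Hd Heq H eps Heps. destruct (H eps Heps) as [del Hdel].
  assert (Hm : 0 < Rmin del d) by (apply Rmin_pos; [apply cond_pos|lra]).
  exists (mkposreal _ Hm). intros hh Hh0 Hh. simpl in Hh.
  rewrite <- !Heq.
  - apply Hdel; auto. apply Rlt_le_trans with (1 := Hh), Rmin_l.
  - replace (t - t) with 0 by ring. rewrite Rabs_R0. lra.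
  - replace (t + hh - t) with hh by ring. apply Rlt_le_trans with (1 := Hh), Rmin_r.
Qed.

Lemma RI_I (I : R -> Prop) (HI : is_open_interval I) f
  (Hc : forall x, I x -> continuity_pt f x) u v : I u -> I v -> Riemann_integrable f u v.
Proof.
  destruct HI as [_ [Hconv _]]. intros Hu Hv.
  destruct (Rle_dec u v).
  - apply continuity_implies_RiemannInt; auto. intros x Hx. apply Hc, (Hconv u x v); auto.
  - apply RiemannInt_P1, continuity_implies_RiemannInt; [lra|]. intros x Hx.
    apply Hc, (Hconv v x u); auto.
Qed.

Lemma FTC_loc (I : R -> Prop) (HI : is_open_interval I) f
  (Hc : forall x, I x -> continuity_pt f x) t0 t : I t0 -> I t ->
  derivable_pt_lim (fun s => integral f t0 s) t (f t).
Proof.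
  intros H0 Ht. pose proof HI as HI'. destruct HI' as [_ [_ Hop]].
  destruct (Hop t Ht) as [e [He Hball]].
  set (a0 := t - e/2). set (b0 := t + e/2).
  assert (Hab : a0 <= b0) by (unfold a0, b0; lra).
  assert (Hin : forall x, a0 <= x <= b0 -> I x).
  { intros x Hx. apply Hball. unfold a0, b0 in Hx. apply Rabs_def1; lra. }
  assert (C0 : forall x, a0 <= x <= b0 -> continuity_pt f x) by (intros; apply Hc, Hin; auto).
  assert (Ha0 : I a0) by (apply Hin; lra).
  pose (pr0 := RI_I I HI f Hc t0 a0 H0 Ha0).
  apply local_deriv with (g1 := fun s => RiemannInt pr0 + primitive Hab (FTC_P1 Hab C0) s) (d := e/2).
  - lra.
  - intros s Hs. apply Rabs_def2 in Hs. unfold primitive.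
    destruct (Rle_dec a0 s) as [r|r]; [|unfold a0 in r; lra].
    destruct (Rle_dec s b0) as [r0|r0]; [|unfold b0 in r0; lra].
    rewrite (integral_eq _ _ _ (RI_I I HI f Hc t0 s H0 (Hin s (conj r r0)))).
    apply RiemannInt_P26.
  - replace (f t) with (0 + f t) by ring. apply derivable_pt_lim_plus.
    + apply derivable_pt_lim_const.
    + apply RiemannInt_P28. unfold a0, b0; lra.
Qed.

Lemma dl_const c x : derivable_pt_lim (fun _ => c) x 0.
Proof. apply derivable_pt_lim_const. Qed.
Lemma dl_id x : derivable_pt_lim (fun s => s) x 1.
Proof. apply derivable_pt_lim_id. Qed.
Lemma dl_plus f g x l1 l2 : derivable_pt_lim f x l1 -> derivable_pt_lim g x l2 ->
  derivable_pt_lim (fun s => f s + g s) x (l1 + l2).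
Proof. intros; apply (derivable_pt_lim_plus f g); auto. Qed.
Lemma dl_minus f g x l1 l2 : derivable_pt_lim f x l1 -> derivable_pt_lim g x l2 ->
  derivable_pt_lim (fun s => f s - g s) x (l1 - l2).
Proof. intros; apply (derivable_pt_lim_minus f g); auto. Qed.
Lemma dl_mult f g x l1 l2 : derivable_pt_lim f x l1 -> derivable_pt_lim g x l2 ->
  derivable_pt_lim (fun s => f s * g s) x (l1 * g x + f x * l2).
Proof. intros; apply (derivable_pt_lim_mult f g); auto. Qed.
Lemma dl_opp f x l : derivable_pt_lim f x l -> derivable_pt_lim (fun s => - f s) x (- l).
Proof. intros; apply (derivable_pt_lim_opp f); auto. Qed.
Lemma dl_div f c x l : derivable_pt_lim f x l -> derivable_pt_lim (fun s => f s / c) x (l * / c).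
Proof.
  intros H. replace (l * / c) with (l * (fun _ => / c) x + f x * 0) by ring.
  apply (dl_mult f (fun _ => / c)); auto. apply dl_const.
Qed.
Lemma dl_sq f x l : derivable_pt_lim f x l -> derivable_pt_lim (fun s => f s ^ 2) x (2 * f x * l).
Proof.
  intros H. replace (2 * f x * l) with (l * f x + f x * l) by ring.
  replace (fun s => f s ^ 2) with (fun s => f s * f s) by (extensionality u; ring).
  apply dl_mult; auto.
Qed.
Lemma dl_exp f x l : derivable_pt_lim f x l -> derivable_pt_lim (fun s => exp (f s)) x (exp (f x) * l).
Proof. intros H. apply (derivable_pt_lim_comp f exp); auto. apply derivable_pt_lim_exp. Qed.
Lemma D2 G G' x l : (forall s, derivable_pt_lim G s (G' s)) -> derivable_pt_lim G' x l ->
  derivable_pt_lim (fun s => Deriv G s) x l.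
Proof.
  intros H1 H2. replace (fun s => Deriv G s) with G'; auto.
  extensionality u. symmetry; apply Deriv_eq, H1.
Qed.

Ltac dlim := lazymatch goal with
| |- derivable_pt_lim (fun _ => ?c) _ _ => apply dl_const
| |- derivable_pt_lim (fun s => s) _ _ => apply dl_id
| |- derivable_pt_lim (fun s => @?f s + @?g s) _ _ => apply (dl_plus f g); [dlim|dlim]
| |- derivable_pt_lim (fun s => @?f s - @?g s) _ _ => apply (dl_minus f g); [dlim|dlim]
| |- derivable_pt_lim (fun s => @?f s * @?g s) _ _ => apply (dl_mult f g); [dlim|dlim]
| |- derivable_pt_lim (fun s => - @?f s) _ _ => apply (dl_opp f); dlim
| |- derivable_pt_lim (fun s => @?f s / ?c) _ _ => apply (dl_div f c); dlim
| |- derivable_pt_lim (fun s => @?f s ^ 2) _ _ => apply (dl_sq f); dlim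
| |- derivable_pt_lim (fun s => exp (@?f s)) _ _ => apply (dl_exp f); dlim
| |- derivable_pt_lim (fun s => Deriv ?G s) _ _ => eapply (D2 G); [intro; dlim | dlim]
| _ => eassumption
end.

Ltac rwD := match goal with
| |- context [Deriv ?g ?x] =>
   let H := fresh in eassert (H : Deriv g x = _) by (apply Deriv_eq; dlim); rewrite H; clear H
end.


Lemma smooth_d (I : R -> Prop) f : smooth_on I f -> forall t, I t -> derivable_pt_lim f t (Deriv f t).
Proof.
  intros [D [H0 H1]] t Ht. assert (E : D O = f) by (extensionality u; auto).
  pose proof (H1 O t Ht) as Hd. rewrite E in Hd. rewrite (Deriv_eq _ _ _ Hd). exact Hd.
Qed.

Lemma dl_eq g x l1 l2 : derivable_pt_lim g x l1 -> l1 = l2 -> derivable_pt_lim g x l2.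
Proof. intros H E; subst; auto. Qed.

Theorem theorem3p1
  (nu eta mu0 rho : R) (Hnu : 0 < nu) (Heta : 0 < eta) (Hmu0 : 0 < mu0) (Hrho : 0 < rho)
  (I : R -> Prop) (HI : is_open_interval I)
  (h beta : R -> R) (Hh : smooth_on I h) (Hbeta : smooth_on I beta)
  (a b c s : R)
  (Lambda : R -> R)
  (HLambda : forall t, I t -> derivable_pt_lim Lambda t (beta t - a * h t))
  (t0 : R) (Ht0 : I t0)
  (theta : R -> R) :
  let q : R -> R := fun t =>
    exp (2 * Lambda t) *
    ((2 * a - b) * s * integral (fun tau => exp (- (2 * Lambda tau))) t0 t + c) in
  let dh := Deriv h in
  let dbeta := Deriv beta in
  MHD_solution I nu eta mu0 rho
    (fun t x y z => a * s * y * z + (beta t - a * h t) * x)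
    (fun t x y z => - beta t * y)
    (fun t x y z => a * h t * z)
    (fun t x y z => a * y * z * q t + (b / 2 - a) * x)
    (fun t x y z => - (b / 2) * y)
    (fun t x y z => a * z)
    (fun t x y z =>
       - rho * ((dbeta t - a * dh t + (beta t - a * h t) ^ 2) * (x ^ 2 / 2)
               + (beta t ^ 2 - dbeta t) * (y ^ 2 / 2)
               + (a * dh t + a ^ 2 * h t ^ 2) * (z ^ 2 / 2)
               - mu0 * a ^ 2 * q t ^ 2 * (y ^ 2 * z ^ 2 / 2)
               - mu0 * a * q t * (b / 2 - a) * (x * y * z))
       + theta t).
Proof.
  intros q dh dbeta.
  assert (Hq : forall t, I t -> derivable_pt_lim q t (2 * (beta t - a * h t) * q t + (2 * a - b) * s)).
  { intros t Ht.
    assert (Hc : forall x, I x -> continuity_pt (fun tau => exp (- (2 * Lambda tau))) x).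
    { intros x Hx. apply derivable_continuous_pt.
      pose proof (HLambda x Hx) as HL.
      unfold derivable_pt; eexists. unfold derivable_pt_abs. dlim. }
    pose proof (FTC_loc I HI _ Hc t0 t Ht0 Ht) as HG.
    pose proof (HLambda t Ht) as HL.
    eapply dl_eq; [unfold q; dlim|].
    unfold q. cbv beta.
    replace (exp (- (2 * Lambda t))) with (/ exp (2 * Lambda t)) by (rewrite exp_Ropp; auto).
    field. apply Rgt_not_eq, exp_pos. }
  unfold MHD_solution. intros t x y z Ht.
  pose proof (Hq t Ht) as Hqt.
  pose proof (smooth_d I h Hh t Ht) as Hht. fold dh in Hht.
  pose proof (smooth_d I beta Hbeta t Ht) as Hbt. fold dbeta in Hbt.
  clear Hq. cbv zeta.
  unfold reg_field, ex_pd_t, ex_pd_x, ex_pd_y, ex_pd_z, ex_deriv, lap, pd_t, pd_x, pd_y, pd_z.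
  cbv beta.
  repeat rwD.
  repeat split; try (eexists; dlim).
  all: try (field; lra).
Qed.
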